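(* Let $\mathfrak g$ be a Lie algebra over a field $\mathbb k$ and $X$ its associated TSD object (obtained by composing the binary SD operation). The homomorphism $\Theta^2\colon H^2_{\rm Lie}(\mathfrak g;\mathfrak g)\to H^2_{\rm TSD}(X;X)$ induced by $\Theta^2(\phi)((a,x)\otimes(b,y)\otimes(c,z))=(0,\ b\phi(x,z)+c\phi(x,y)+[\phi(x,y),z]+\phi([x,y],z))$ is injective.
   Context: $X=\mathbb k\oplus\mathfrak g$, $\Delta(a,x)=(a,x)\otimes(1,0)+(1,0)\otimes(0,x)$, $\Delta_3=(\Delta\otimes\mathbb 1)\Delta$, $q((a,x)\otimes(b,y))=(ab,bx+[x,y])$, $T=q\circ(q\otimes\mathbb 1)$, so $T((a,x)\otimes(b,y)\otimes(c,z))=(abc,bcx+c[x,y]+b[x,z]+[[x,y],z])$. TSD cohomology: with $\sigma$ sending $u_1\otimes\cdots\otimes u_9$ to $u_1\otimes u_4\otimes u_7\otimes u_2\otimes u_5\otimes u_8\otimes u_3\otimes u_6\otimes u_9$: $C^1_{\rm TSD}$ = linear $f$ with $\Delta_3 f=(f\otimes\mathbb 1\otimes\mathbb 1+\mathbb 1\otimes f\otimes\mathbb 1+\mathbb 1\otimes\mathbb 1\otimes f)\Delta_3$; $C^2_{\rm TSD}$ = linear $\psi\colon X^{\otimes 3}\to X$ with $\Delta_3\psi=(\psi\otimes T\otimes T+T\otimes\psi\otimes T+T\otimes T\otimes\psi)\sigma\Delta_3^{\otimes3}$; $\delta^1 f(x\otimes y\otimes z)=f(T(x\otimes y\otimes z))-T(f(x)\otimes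 y\otimes z)-T(x\otimes f(y)\otimes z)-T(x\otimes y\otimes f(z))$; $\delta^2\psi(x\otimes y\otimes z\otimes w\otimes u)=T(\psi(x\otimes y\otimes z)\otimes w\otimes u)+\psi(T(x\otimes y\otimes z)\otimes w\otimes u)-\psi(A_1\otimes A_2\otimes A_3)-T(\Psi_1\otimes A_2\otimes A_3)-T(A_1\otimes\Psi_2\otimes A_3)-T(A_1\otimes A_2\otimes\Psi_3)$, $A_i=T(x_i\otimes w^{(i)}\otimes u^{(i)})$ with $(x_1,x_2,x_3)=(x,y,z)$, $\Psi_i$ likewise with $\psi$; $H^2_{\rm TSD}=(C^2\cap\ker\delta^2)/\delta^1(C^1)$. Lie cohomology: alternating bilinear $2$-cochains $\phi$, $\delta^2\phi(x,y,z)=[\phi(x,y),z]+[\phi(y,z),x]+[\phi(z,x),y]+\phi([x,y],z)+\phi([y,z],x)+\phi([z,x],y)$, $\delta^1f(x,y)=f([x,y])-[f(x),y]-[x,f(y)]$, $H^2_{\rm Lie}=\ker\delta^2/\operatorname{im}\delta^1$. *)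

(* Defs.v *)
From HB Require Import structures.
From mathcomp Require Import all_boot all_order all_algebra.
Set Implicit Arguments. Unset Strict Implicit. Unset Printing Implicit Defensive.
Import GRing.Theory.
Local Open Scope ring_scope.

Section TSD.
Variables (k : fieldType) (g : lmodType k) (br : g -> g -> g).

Definition is_lie_bracket :=
  [/\ forall x : g, linear (br x),
      forall y : g, linear (fun x => br x y),
      forall x : g, br x x = 0
    & forall x y z : g, br (br x y) z + br (br y z) x + br (br z x) y = 0].

Definition X := (k^o * g)%type.

Definition Xe : X := (1 : k^o, 0 : g).
Definition Xpi (v : X) : X := (0 : k^o, v.2).

(* Delta(a,x) = (a,x)(x)(1,0) + (1,0)(x)(0,x), as a formal sum of pure tensors;
   Delta_3 = (Delta (x) 1) Delta, applied termwise. *)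
Definition Delta (v : X) : seq (X * X) := [:: (v, Xe); (Xe, Xpi v)].
Definition Delta3 (v : X) : seq (X * X * X) :=
  flatten [seq [seq (w.1, w.2, u.2) | w <- Delta u.1] | u <- Delta v].

Definition q (u v : X) : X := ((u.1 : k) * v.1 : k^o, (v.1 : k) *: u.2 + br u.2 v.2).
Definition T (u v w : X) : X := q (q u v) w.

(* Elements of X^{(x)3} are represented by finite formal sums of pure tensors;
   two such sums are equal in X (x) X (x) X iff all pure-tensor functionals
   alpha (x) beta (x) gamma (alpha, beta, gamma linear forms on X) agree. *)
Definition tev (al be ga : X -> k) (s : seq (X * X * X)) : k :=
  \sum_(t <- s) al t.1.1 * be t.1.2 * ga t.2.
Definition teq (s t : seq (X * X * X)) : Prop :=
  forall al be ga : {scalar X}, tev al be ga s = tev al be ga t.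

Definition C1_TSD (f : X -> X) : Prop :=
  forall v : X,
    teq (Delta3 (f v))
        ([seq (f t.1.1, t.1.2, t.2) | t <- Delta3 v] ++
         [seq (t.1.1, f t.1.2, t.2) | t <- Delta3 v] ++
         [seq (t.1.1, t.1.2, f t.2) | t <- Delta3 v]).

Definition delta1_TSD (f : X -> X) (x y z : X) : X :=
  f (T x y z) - T (f x) y z - T x (f y) z - T x y (f z).

Definition lie_2cochain (phi : g -> g -> g) : Prop :=
  [/\ forall x, linear (phi x), forall y, linear (fun x => phi x y)
    & forall x, phi x x = 0].
Definition delta2_Lie (phi : g -> g -> g) (x y z : g) : g :=
  br (phi x y) z + br (phi y z) x + br (phi z x) y
  + phi (br x y) z + phi (br y z) x + phi (br z x) y.
Definition delta1_Lie (f : g -> g) (x y : g) : g :=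
  f (br x y) - br (f x) y - br x (f y).

Definition Theta2 (phi : g -> g -> g) (u v w : X) : X :=
  (0 : k^o, (v.1 : k) *: phi u.2 w.2 + (w.1 : k) *: phi u.2 v.2
            + br (phi u.2 v.2) w.2 + phi (br u.2 v.2) w.2).

End TSD.

(* Main.v *)
Require Import Defs.
From HB Require Import structures.
From mathcomp Require Import all_boot all_order all_algebra.
Local Open Scope ring_scope.
Import GRing.Theory.

Section Aux.
Variables (k : fieldType) (g : lmodType k).

Lemma lin_add {h : g -> g} : linear h -> forall u v, h (u + v) = h u + h v.
Proof. by move=> L u v; have := L 1 u v; rewrite !scale1r. Qed.
Lemma lin_0 {h : g -> g} : linear h -> h 0 = 0.
Proof.
move=> L; have E : h 0 = h 0 + h 0 by have := L 1 0 0; rewrite /= !scale1r !addr0.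
by apply: (addrI (h 0)); rewrite addr0 -{1}E.
Qed.
Lemma lin_scale {h : g -> g} : linear h -> forall a u, h (a *: u) = a *: h u.
Proof. by move=> L a u; have := L a u 0; rewrite !addr0 (lin_0 L) addr0. Qed.
Lemma lin_opp {h : g -> g} : linear h -> forall u, h (- u) = - h u.
Proof. by move=> L u; rewrite -scaleN1r (lin_scale L) scaleN1r. Qed.
Lemma lin_sub {h : g -> g} : linear h -> forall u v, h (u - v) = h u - h v.
Proof. by move=> L u v; rewrite (lin_add L) (lin_opp L). Qed.

Variable (f : {linear X g -> X g}).
Definition hfun (x : g) : g := (f ((0 : k^o), x)).2 + (f (Xe g)).1 *: x.
Lemma hfun_lin : linear hfun.
Proof.
move=> a u v; rewrite /hfun.
have -> : (((0 : k^o), a *: u + v) : X g) = a *: ((0 : k^o), u) + ((0:k^o), v).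
  congr (_, _); simpl; first by rewrite ?scaler0 ?mulr0 addr0.
rewrite (linearP f a) /=.
by rewrite !scalerDr !scalerA mulrC addrACA.
Qed.
HB.instance Definition _ := GRing.isLinear.Build k g g *:%R hfun hfun_lin.
End Aux.
Arguments lin_0 {k g h}.
Arguments lin_add {k g h}.
Arguments lin_scale {k g h}.
Arguments lin_opp {k g h}.
Arguments lin_sub {k g h}.

Theorem mainTheorem8 (k : fieldType) (g : lmodType k) (br : g -> g -> g)
  (Hlie : is_lie_bracket br)
  (phi : g -> g -> g) (Hphi : lie_2cochain phi)
  (Hcoc : forall x y z : g, delta2_Lie br phi x y z = 0) :
  (exists f : {linear X g -> X g},
      C1_TSD f /\
      forall u v w : X g, Theta2 br phi u v w = delta1_TSD br f u v w) ->
  exists h : {linear g -> g}, forall x y : g, phi x y = delta1_Lie br h x y.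
Proof.
case=> f [_ H].
case: Hlie => Lr Ll Bxx _.
case: Hphi => Pr Pl Pxx.
have br0r : forall x, br x 0 = 0 by move=> x; exact: lin_0.
have br0l : forall y, br 0 y = 0 by move=> y; have := lin_0 (Ll y); done.
have ph0r : forall x, phi x 0 = 0 by move=> x; exact: lin_0.
have ph0l : forall y, phi 0 y = 0 by move=> y; have := lin_0 (Pl y); done.
have anti : forall x y, br x y = - br y x.
  move=> x y; apply/eqP; rewrite -subr_eq0 opprK.
  have := Bxx (x + y); rewrite (lin_add (Lr _)) !(lin_add (Ll _)) !Bxx add0r addr0.
  by move=> E; rewrite addrC E.
have f00 : f ((0:k^o), (0:g)) = 0 by exact: linear0.
set c := (f (Xe g)).1. set z := (f (Xe g)).2.
have fe : f (Xe g) = (c, z) by rewrite /c /z; case: (f _).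
have alpha0 : forall x : g, (f ((0:k^o), x)).1 = 0.
  move=> x; have := congr1 snd (H ((0:k^o), x) ((0:k^o), x) (Xe g)).
  rewrite /Theta2 /delta1_TSD /T /q fe /=.
  rewrite !scale0r !scale1r !add0r !Bxx !br0r !br0l !ph0r !mul0r !addr0 f00 Pxx scaler0 /= !subr0 sub0r.
  rewrite (anti x) opprD opprK addrCA addNr addr0 => /eqP; rewrite eq_sym oppr_eq0 scaler_eq0.
  case/orP=> [/eqP //|/eqP ->]; have := linear0 f; rewrite /= => -> //.
have zc : forall w : g, br z w = 0.
  move=> w; have := congr1 snd (H (Xe g) (Xe g) ((0:k^o), w)).
  rewrite /Theta2 /delta1_TSD /T /q fe /=.
  rewrite !scale0r !scale1r !add0r !addr0 !br0r !br0l !ph0l ?scale0r ?mulr0 ?scaler0 ?add0r ?addr0.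
  rewrite !br0l f00 /= ?subr0 ?sub0r => /esym/eqP; rewrite oppr_eq0 => /eqP //.
have Hf : forall x y : g, phi x y = (f ((0:k^o), br x y)).2 - br (f ((0:k^o), x)).2 y
      - br x (f ((0:k^o), y)).2 - c *: br x y.
  move=> x y; have := congr1 snd (H ((0:k^o), x) ((0:k^o), y) (Xe g)).
  rewrite /Theta2 /delta1_TSD /T /q fe /=.
  rewrite !scale0r !scale1r ?add0r ?addr0 !br0r !ph0r !mul0r ?addr0 ?add0r alpha0 scale0r ?add0r ?addr0.
  by rewrite (anti _ z) zc oppr0 addr0.
exists (@hfun _ _ f) => x y.
rewrite Hf /delta1_Lie /hfun /= -/c.
rewrite (lin_add (Ll y)) (lin_scale (Ll y)) (lin_add (Lr x)) (lin_scale (Lr x)) /=.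
rewrite !opprD !addrA.
by rewrite (addrAC _ (c *: br x y)) addrK.
Qed.
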